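(* Let $\gamma\in(1,2]$ and let $(\rho_L,u_L,p_L)$, $(\rho_R,u_R,p_R)$ be two states with $\rho_K,p_K>0$, $u_K\in\mathbb R^d$, $m_K=\rho_Ku_K$, $a_K=\sqrt{\gamma p_K/\rho_K}$. With $\langle f\rangle=\frac{f_L+f_R}2$ and $[\![f]\!]=f_R-f_L$, it holds $$\langle|u|^2\rangle\le(\|\langle u\rangle\|+\|[\![u]\!]\|)^2,\quad\langle a^2\rangle\le2\langle a\rangle^2,\quad\langle p\rangle\langle\rho\rangle^{-1}\le\frac4\gamma\langle a\rangle^2,$$ $$\langle\rho|u|^2\rangle\langle\rho\rangle^{-1}\le2(\|\langle u\rangle\|+\|[\![u]\!]\|)^2,\quad\|\langle m\rangle\|\langle\rho\rangle^{-1}\le\|\langle u\rangle\|+\frac12\|[\![u]\!]\|.$$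
   Context: $\|\cdot\|$ denotes the $\ell^1$ norm of a vector in $\mathbb R^d$. *)

(* Defs.v *)
From HB Require Import structures.
From mathcomp Require Import all_boot all_order all_algebra.
Set Implicit Arguments. Unset Strict Implicit. Unset Printing Implicit Defensive.
Import Order.TTheory GRing.Theory Num.Theory.
Local Open Scope ring_scope.

Definition l1norm (R : realDomainType) (d : nat) (v : 'rV[R]_d) : R :=
  \sum_(i < d) `|v 0 i|.

Definition sqnorm (R : ringType) (d : nat) (v : 'rV[R]_d) : R :=
  \sum_(i < d) (v 0 i) ^+ 2.

Definition avg (R : fieldType) (fL fR : R) : R := (fL + fR) / 2.
Definition jump (R : ringType) (fL fR : R) : R := fR - fL.

Definition vavg (R : fieldType) (d : nat) (uL uR : 'rV[R]_d) : 'rV[R]_d :=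
  (2%:R)^-1 *: (uL + uR).
Definition vjump (R : ringType) (d : nat) (uL uR : 'rV[R]_d) : 'rV[R]_d :=
  uR - uL.

Definition sound (R : rcfType) (gamma rho p : R) : R :=
  Num.sqrt (gamma * p / rho).

(* Main.v *)
Require Import Defs.
From HB Require Import structures.
From mathcomp Require Import all_boot all_order all_algebra.
From mathcomp Require Import ring lra.
Import Order.TTheory GRing.Theory Num.Theory.
Local Open Scope ring_scope.

Lemma comp5 (R : rcfType) (a b x y : R) : 0 < a -> 0 < b ->
  `|2^-1 * (a * x + b * y)| / ((a + b) / 2) <= `|2^-1 * (x + y)| + 2^-1 * `|y - x|.
Proof.
move=> ha hb.
have hab : 0 < (a + b) / 2 by lra.
rewrite ler_pdivrMr //.
have P1 : x + y <= `|x + y| by apply: ler_norm.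
have P2 : - (x + y) <= `|x + y| by rewrite -normrN; apply: ler_norm.
have Q1 : y - x <= `|y - x| by apply: ler_norm.
have Q2 : - (y - x) <= `|y - x| by rewrite -normrN; apply: ler_norm.
have e1 : `|2^-1 * (x + y)| = 2^-1 * `|x+y| by rewrite normrM [`|2^-1|]ger0_norm // invr_ge0 ler0n.
rewrite e1 ler_norml.
have h1 : 0 <= a * (`|x + y| - (x + y)) by apply: mulr_ge0; lra.
have h2 : 0 <= a * (`|x + y| - - (x + y)) by apply: mulr_ge0; lra.
have h3 : 0 <= a * (`|y - x| - (y - x)) by apply: mulr_ge0; lra.
have h4 : 0 <= a * (`|y - x| - - (y - x)) by apply: mulr_ge0; lra.
have h5 : 0 <= b * (`|x + y| - (x + y)) by apply: mulr_ge0; lra.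
have h6 : 0 <= b * (`|x + y| - - (x + y)) by apply: mulr_ge0; lra.
have h7 : 0 <= b * (`|y - x| - (y - x)) by apply: mulr_ge0; lra.
have h8 : 0 <= b * (`|y - x| - - (y - x)) by apply: mulr_ge0; lra.
apply/andP; split; lra.
Qed.

Lemma sum_sq_le (R : rcfType) n (f : 'I_n -> R) : (forall i, 0 <= f i) ->
  \sum_(i < n) f i ^+ 2 <= (\sum_(i < n) f i) ^+ 2.
Proof.
elim: n f => [|n IH] f hf; first by rewrite !big_ord0 expr0n.
rewrite !big_ord_recr /=.
have := IH (fun i => f (widen_ord (leqnSn n) i)) (fun i => hf _).
have : 0 <= \sum_(i < n) f (widen_ord (leqnSn n) i) by apply: sumr_ge0.
have := hf ord_max.
move: (\sum_(i < n) f (widen_ord (leqnSn n) i)) (\sum_(i < n) f (widen_ord (leqnSn n) i) ^+ 2) (f ord_max).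
move=> s t z hz hs ht; nra.
Qed.

Lemma sq_l1 (R : rcfType) d (v : 'rV[R]_d) : sqnorm v <= l1norm v ^+ 2.
Proof.
rewrite /sqnorm /l1norm.
have -> : \sum_(i < d) v 0 i ^+ 2 = \sum_(i < d) `|v 0 i| ^+ 2.
  by apply: eq_bigr => i _; rewrite real_normK // num_real.
by apply: sum_sq_le => i.
Qed.

Lemma l1_ge0 (R : rcfType) d (v : 'rV[R]_d) : 0 <= l1norm v.
Proof. by apply: sumr_ge0. Qed.

Lemma l1_side (R : rcfType) d (uL uR : 'rV[R]_d) :
  l1norm uL <= l1norm (vavg uL uR) + 2^-1 * l1norm (vjump uL uR) /\
  l1norm uR <= l1norm (vavg uL uR) + 2^-1 * l1norm (vjump uL uR).
Proof.
rewrite /l1norm mulr_sumr -big_split /=; split; apply: ler_sum => i _;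
rewrite /vavg /vjump !mxE normrM [`|2^-1|]ger0_norm ?invr_ge0 ?ler0n //.
- move: (uL 0 i) (uR 0 i) => x y.
  have := ler_normB (2^-1*(x+y)) (2^-1*(y-x)).
  have -> : 2^-1*(x+y) - 2^-1*(y-x) = x by field.
  by rewrite !normrM [`|2^-1|]ger0_norm ?invr_ge0 ?ler0n.
- move: (uL 0 i) (uR 0 i) => x y.
  have := ler_normD (2^-1*(x+y)) (2^-1*(y-x)).
  have -> : 2^-1*(x+y) + 2^-1*(y-x) = y by field.
  by rewrite !normrM [`|2^-1|]ger0_norm ?invr_ge0 ?ler0n.
Qed.

Theorem lemmaA1 (R : rcfType) (d : nat) (gamma : R)
  (rhoL pL rhoR pR : R) (uL uR : 'rV[R]_d) :
  1 < gamma -> gamma <= 2 ->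
  0 < rhoL -> 0 < pL -> 0 < rhoR -> 0 < pR ->
  let mL := rhoL *: uL in
  let mR := rhoR *: uR in
  let aL := sound gamma rhoL pL in
  let aR := sound gamma rhoR pR in
  let U := l1norm (vavg uL uR) + l1norm (vjump uL uR) in
  [/\ avg (sqnorm uL) (sqnorm uR) <= U ^+ 2,
      avg (aL ^+ 2) (aR ^+ 2) <= 2 * (avg aL aR) ^+ 2,
      avg pL pR / avg rhoL rhoR <= 4 / gamma * (avg aL aR) ^+ 2,
      avg (rhoL * sqnorm uL) (rhoR * sqnorm uR) / avg rhoL rhoR <= 2 * U ^+ 2
    & l1norm (vavg mL mR) / avg rhoL rhoR
        <= l1norm (vavg uL uR) + 2^-1 * l1norm (vjump uL uR)].
Proof.
move=> g1 g2 rL pL0 rR pR0 mL mR aL aR U.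
have [lL lR] := l1_side _ _ uL uR.
have A0 := l1_ge0 _ _ (vavg uL uR).
have J0 := l1_ge0 _ _ (vjump uL uR).
have L0 := l1_ge0 _ _ uL.
have R0 := l1_ge0 _ _ uR.
have sL := sq_l1 _ _ uL.
have sR := sq_l1 _ _ uR.
have sL0 : 0 <= sqnorm uL by apply: sumr_ge0 => i _; apply: sqr_ge0.
have sR0 : 0 <= sqnorm uR by apply: sumr_ge0 => i _; apply: sqr_ge0.
have sLU : sqnorm uL <= U ^+ 2.
  apply: (le_trans sL); rewrite /U; nra.
have sRU : sqnorm uR <= U ^+ 2.
  apply: (le_trans sR); rewrite /U; nra.
have U0 : 0 <= U ^+ 2 by apply: sqr_ge0.
have avr : 0 < avg rhoL rhoR by rewrite /avg; lra.
have aL0 : 0 <= aL by apply: sqrtr_ge0.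
have aR0 : 0 <= aR by apply: sqrtr_ge0.
have g0 : 0 < gamma by lra.
have ga : 0 < gamma^-1 by rewrite invr_gt0.
have eL : pL = aL ^+ 2 * rhoL * gamma^-1.
  rewrite /aL /sound sqr_sqrtr; first by field; apply/andP; split; lra.
  by apply: divr_ge0; [apply: mulr_ge0; lra | lra].
have eR : pR = aR ^+ 2 * rhoR * gamma^-1.
  rewrite /aR /sound sqr_sqrtr; first by field; apply/andP; split; lra.
  by apply: divr_ge0; [apply: mulr_ge0; lra | lra].
split.
- rewrite /avg; lra.
- rewrite /avg; nra.
- rewrite ler_pdivrMr // eL eR /avg.
  have k : aL ^+ 2 * rhoL + aR ^+ 2 * rhoR <= (aL + aR) ^+ 2 * (rhoL + rhoR).
    have h1 : 0 <= aL * aR by apply: mulr_ge0.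
    nra.
  have h : 0 <= gamma^-1 * ((aL + aR) ^+ 2 * (rhoL + rhoR) - (aL ^+ 2 * rhoL + aR ^+ 2 * rhoR)) by apply: mulr_ge0; lra.
  nra.
- rewrite ler_pdivrMr // /avg. nra.
- rewrite ler_pdivrMr // /l1norm mulr_sumr -big_split /= mulr_suml.
  apply: ler_sum => i _.
  rewrite !mxE -ler_pdivrMr //.
  exact: comp5.
Qed.
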